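(* If independent random variables $X_1,X_2,X_3$ are uniformly distributed on intervals of lengths $a_1,a_2,a_3>0$, then $$I(X_1+X_2+X_3)\le 2\Big[\frac1{a_1a_2}+\frac1{a_1a_3}+\frac1{a_2a_3}\Big].$$
   Context: Fisher information: for $X$ with absolutely continuous density $p$, $I(X)=\int_{\{p>0\}}p'^2/p\,dx$, otherwise $+\infty$. *)

(* Defs.v *)
From Stdlib Require Import Reals Lra.
Open Scope R_scope.

Definition unif_density (c a : R) (x : R) : R :=
  if Rle_dec c x then (if Rle_dec x (c + a) then / a else 0) else 0.

Definition improper_RInt (f : R -> R) (l : R) : Prop :=
  forall eps : R, 0 < eps -> exists M : R, forall u v : R,
    u <= - M -> M <= v ->
    exists pr : Riemann_integrable f u v, Rabs (RiemannInt pr - l) < eps.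

(* Convolution statement: h = f * g, i.e. h x = int f(y) g(x - y) dy for all x.
   This is the (continuous version of the) density of the sum of independent
   random variables with densities f and g. *)
Definition is_convolution (f g h : R -> R) : Prop :=
  forall x : R, improper_RInt (fun y => f y * g (x - y)) (h x).

Definition fisher_integrand (p p' : R -> R) (x : R) : R :=
  if Rlt_dec 0 (p x) then (p' x) ^ 2 / p x else 0.

(* "I(p) <= B": p is differentiable everywhere (in particular absolutely
   continuous), with derivative p', and the (nonnegative) integrand
   p'^2/p on {p>0} is Riemann integrable on every compact interval with all
   these integrals bounded by B; hence int_{p>0} p'^2/p <= B. *)
Definition fisher_info_le (p : R -> R) (B : R) : Prop :=
  exists p' : R -> R,
    (forall x : R, derivable_pt_lim p x (p' x)) /\
    (forall u v : R, u <= v ->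
       exists pr : Riemann_integrable (fisher_integrand p p') u v,
         RiemannInt pr <= B).

(* Main.v *)
Require Import Defs.
From Stdlib Require Import Reals.
From Coquelicot Require Import Coquelicot.
From Stdlib Require Import Reals Lra FunctionalExtensionality.
Open Scope R_scope.

Definition Lf (a2 a3 t : R) := Rmax 0 (Rmin (Rmin t a2) (Rmin a3 (a2+a3-t))).

Ltac dest_all := repeat match goal with
  | |- context [Rle_dec ?a ?b] => destruct (Rle_dec a b)
  | H : context [Rle_dec ?a ?b] |- _ => destruct (Rle_dec a b)
  end.

Lemma Lf_lip a2 a3 x y : Rabs (Lf a2 a3 x - Lf a2 a3 y) <= Rabs (x - y).
Proof.
  unfold Lf, Rmax, Rmin.
  destruct (Rle_dec x a2), (Rle_dec y a2), (Rle_dec a3 (a2+a3-x)), (Rle_dec a3 (a2+a3-y));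
  dest_all;
  unfold Rabs; repeat match goal with |- context [Rcase_abs ?a] => destruct (Rcase_abs a) end; lra.
Qed.
Lemma scalR (k r : R) : scal k r = k * r. Proof. reflexivity. Qed.
Lemma oppR (r : R) : opp r = - r. Proof. reflexivity. Qed.
Lemma plusR (r s : R) : plus r s = r + s. Proof. reflexivity. Qed.
Lemma minusR (r s : R) : minus r s = r - s. Proof. reflexivity. Qed.
Ltac rscal := repeat match goal with |- context [scal ?k ?r] => change (scal k r) with (Rmult k r) end.
Ltac toR := match goal with |- ?a = ?b => change (@eq R a b) end.
Ltac rplus := repeat match goal with |- context [plus ?a ?b] => change (plus a b) with (Rplus a b) end.
Lemma lip_cont (f : R -> R) : (forall x y, Rabs (f x - f y) <= Rabs (x - y)) -> forall x, continuous f x.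
Proof.
  intros H x. apply continuity_pt_filterlim.
  intros eps Heps. exists eps; split; [lra|].
  intros y [_ Hy]. simpl in *. unfold R_dist in *.
  eapply Rle_lt_trans; [apply H|]. exact Hy.
Qed.

Lemma Lf_cont a2 a3 x : continuous (Lf a2 a3) x.
Proof. apply lip_cont. apply Lf_lip. Qed.

Lemma Lf_nonneg a2 a3 t : 0 <= Lf a2 a3 t.
Proof. unfold Lf; apply Rmax_l. Qed.

Lemma Lf_zl a2 a3 t : 0 < a2 -> 0 < a3 -> t <= 0 -> Lf a2 a3 t = 0.
Proof. intros. unfold Lf, Rmax, Rmin. dest_all; lra. Qed.

Lemma Lf_zr a2 a3 t : 0 < a2 -> 0 < a3 -> a2 + a3 <= t -> Lf a2 a3 t = 0.
Proof. intros. unfold Lf, Rmax, Rmin. dest_all; lra. Qed.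

Lemma Lf_id a2 a3 t : 0 <= t -> t <= a2 -> t <= a3 -> Lf a2 a3 t = t.
Proof. intros. unfold Lf, Rmax, Rmin. dest_all; lra. Qed.

Lemma Lf_rt a2 a3 t : a2 <= t -> a3 <= t -> t <= a2 + a3 -> Lf a2 a3 t = a2 + a3 - t.
Proof. intros. unfold Lf, Rmax, Rmin. dest_all; lra. Qed.

Lemma Lf_pos a2 a3 t : 0 < a2 -> 0 < a3 -> 0 < t < a2 + a3 -> 0 < Lf a2 a3 t.
Proof. intros. unfold Lf, Rmax, Rmin. dest_all; lra. Qed.

Lemma RInt_lin (al k a b : R) :
  RInt (fun z => al * (z - k)) a b = al * ((b - k)^2 - (a - k)^2) / 2.
Proof.
  apply is_RInt_unique.
  replace (al * ((b - k)^2 - (a - k)^2) / 2) with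
    (minus ((fun z => al * (z-k)^2/2) b) ((fun z => al * (z-k)^2/2) a)).
  2:{ unfold minus, plus, opp; simpl; field. }
  apply (is_RInt_derive (fun z => al * (z-k)^2/2)).
  - intros x _. auto_derive; auto. field.
  - intros x _. apply continuity_pt_filterlim. apply derivable_continuous_pt.
    reg.
Qed.

Section G.
Variable f : R -> R.
Hypothesis fc : forall x, continuous f x.
Hypothesis fp : forall x, 0 <= f x.
Hypothesis fl : forall x y, Rabs (f x - f y) <= Rabs (x - y).

Lemma exf a b : ex_RInt f a b.
Proof. apply (@ex_RInt_continuous R_CompleteNormedModule); intros; apply fc. Qed.

Lemma RInt3 a b c d : a <= b -> b <= c -> c <= d -> RInt f b c <= RInt f a d.
Proof.
  intros. rewrite <- (RInt_Chasles f a b d) by apply exf.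
  rewrite <- (RInt_Chasles f b c d) by apply exf.
  unfold plus; simpl.
  assert (0 <= RInt f a b) by (apply RInt_ge_0; auto; apply exf).
  assert (0 <= RInt f c d) by (apply RInt_ge_0; auto; apply exf).
  lra.
Qed.

Lemma lowL r s t e : r <= t - e -> 0 <= e -> t <= s -> e <= f t -> e^2/2 <= RInt f r s.
Proof.
  intros. eapply Rle_trans; [|apply (RInt3 r (t-e) t s); lra].
  replace (e^2/2) with (RInt (fun z => 1 * (z - (t - e))) (t-e) t).
  2:{ rewrite RInt_lin; simpl; field. }
  apply RInt_le; try lra.
  - apply (@ex_RInt_continuous R_CompleteNormedModule); intros; apply continuity_pt_filterlim, derivable_continuous_pt; reg.
  - apply exf.
  - intros x Hx. specialize (fl t x). revert fl. unfold Rabs.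
    repeat destruct Rcase_abs; lra.
Qed.

Lemma lowR r s t e : r <= t -> 0 <= e -> t + e <= s -> e <= f t -> e^2/2 <= RInt f r s.
Proof.
  intros. eapply Rle_trans; [|apply (RInt3 r t (t+e) s); lra].
  replace (e^2/2) with (RInt (fun z => -1 * (z - (t + e))) t (t+e)).
  2:{ rewrite RInt_lin; simpl; field. }
  apply RInt_le; try lra.
  - apply (@ex_RInt_continuous R_CompleteNormedModule); intros; apply continuity_pt_filterlim, derivable_continuous_pt; reg.
  - apply exf.
  - intros x Hx. specialize (fl t x). revert fl. unfold Rabs.
    repeat destruct Rcase_abs; lra.
Qed.

Lemma keyineq r s : r <= s -> (f s - f r)^2 <= 2 * RInt f r s.
Proof.
  intros H.
  assert (B : Rabs (f s - f r) <= s - r) by (rewrite <- (Rabs_right (s - r)) by lra; apply fl).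
  assert (C1 := fp r). assert (C2 := fp s).
  destruct (Rle_dec (f r) (f s)).
  - rewrite Rabs_right in B by lra.
    assert (D : (f s - f r)^2/2 <= RInt f r s) by (apply (lowL r s s (f s - f r)); lra). lra.
  - rewrite Rabs_left in B by lra.
    assert (D : (f r - f s)^2/2 <= RInt f r s) by (apply (lowR r s r (f r - f s)); lra).
    replace ((f s - f r)^2) with ((f r - f s)^2) by ring; lra.
Qed.
End G.

Lemma uniq_lim (f : R -> R) l l' K : improper_RInt f l ->
  (forall u v, u <= -K -> K <= v -> RInt f u v = l') -> l = l'.
Proof.
  intros H1 H2. destruct (Req_dec l l') as [|Hn]; auto.
  assert (He : 0 < Rabs (l' - l)) by (apply Rabs_pos_lt; lra).
  destruct (H1 _ He) as [M HM].
  assert (A1 := Rle_abs M). assert (A2 := Rle_abs K). assert (A3 := Rle_abs (-M)).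
  assert (A4 := Rle_abs (-K)). rewrite Rabs_Ropp in A3, A4.
  destruct (HM (-(Rabs M + Rabs K)) (Rabs M + Rabs K)) as [pr Hpr]; try lra.
  rewrite <- RInt_Reals, H2 in Hpr by lra. lra.
Qed.

Lemma zero_int (g : R -> R) a b : (forall x, Rmin a b < x < Rmax a b -> g x = 0) ->
  ex_RInt g a b /\ RInt g a b = 0.
Proof.
  intros H. split.
  - apply ex_RInt_ext with (fun _ => 0). intros; symmetry; auto. apply ex_RInt_const.
  - rewrite (RInt_ext g (fun _ => 0)) by auto. rewrite RInt_const. unfold scal; simpl.
    unfold mult; simpl; ring.
Qed.

Lemma window (g h : R -> R) lo hi u v :
  u <= lo -> lo <= hi -> hi <= v ->
  (forall z, z < lo -> g z = 0) -> (forall z, hi < z -> g z = 0) ->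
  (forall z, lo < z < hi -> g z = h z) -> ex_RInt h lo hi ->
  ex_RInt g u v /\ RInt g u v = RInt h lo hi.
Proof.
  intros H1 H2 H3 Z1 Z2 E Ex.
  assert (X1 : ex_RInt g u lo /\ RInt g u lo = 0).
  { apply zero_int. intros x Hx. rewrite Rmax_right in Hx by lra. apply Z1; lra. }
  assert (X3 : ex_RInt g hi v /\ RInt g hi v = 0).
  { apply zero_int. intros x Hx. rewrite Rmin_left in Hx by lra. apply Z2; lra. }
  assert (X2 : ex_RInt g lo hi).
  { apply ex_RInt_ext with h; auto. intros x Hx. rewrite Rmin_left, Rmax_right in Hx by lra.
    symmetry; apply E; lra. }
  assert (R2 : RInt g lo hi = RInt h lo hi).
  { apply RInt_ext. intros x Hx. rewrite Rmin_left, Rmax_right in Hx by lra. apply E; lra. }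
  destruct X1 as [X1 R1], X3 as [X3 R3].
  split.
  - apply ex_RInt_Chasles with lo; auto. apply ex_RInt_Chasles with hi; auto.
  - rewrite <- (RInt_Chasles g u lo v); auto. 2: apply ex_RInt_Chasles with hi; auto.
    rewrite <- (RInt_Chasles g lo hi v); auto.
    rewrite R1, R2, R3. unfold plus; simpl. ring.
Qed.

Lemma box (g : R -> R) lo hi k u v :
  u <= lo -> u <= hi -> lo <= v -> hi <= v ->
  (forall z, z < lo -> g z = 0) -> (forall z, hi < z -> g z = 0) ->
  (forall z, lo <= z <= hi -> g z = k) ->
  RInt g u v = k * Rmax 0 (hi - lo).
Proof.
  intros H1 H2 H3 H4 Z1 Z2 E.
  destruct (Rle_dec lo hi).
  - rewrite Rmax_right by lra.
    destruct (window g (fun _ => k) lo hi u v) as [_ ->]; auto.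
    + intros; apply E; lra.
    + apply ex_RInt_const.
    + rewrite RInt_const. unfold scal; simpl; unfold mult; simpl; ring.
  - rewrite Rmax_left by lra.
    destruct (window g (fun _ => 0) lo lo u v) as [_ ->]; auto; try lra.
    + intros z Hz. apply Z2; lra.
    + intros; lra.
    + apply ex_RInt_const.
    + rewrite RInt_const. unfold scal; simpl; unfold mult; simpl; ring.
Qed.

Lemma q_val a2 a3 c2 c3 q y : 0 < a2 -> 0 < a3 ->
  is_convolution (unif_density c2 a2) (unif_density c3 a3) q ->
  q y = Lf a2 a3 (y - c2 - c3) / (a2 * a3).
Proof.
  intros Ha2 Ha3 Hc.
  set (lo := Rmax c2 (y - c3 - a3)). set (hi := Rmin (c2 + a2) (y - c3)).
  set (K := Rabs lo + Rabs hi + 1).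
  apply (uniq_lim _ _ _ K (Hc y)).
  intros u v Hu Hv.
  assert (A1 := Rle_abs lo). assert (A2 := Rle_abs hi). assert (A3 := Rle_abs (-lo)).
  assert (A4 := Rle_abs (-hi)). rewrite Rabs_Ropp in A3, A4.
  rewrite (box _ lo hi (/a2 * /a3)); try (unfold K in *; lra).
  - replace (Rmax 0 (hi - lo)) with (Lf a2 a3 (y - c2 - c3)).
    + change (@eq R (/ a2 * / a3 * Lf a2 a3 (y - c2 - c3)) (Lf a2 a3 (y - c2 - c3) / (a2 * a3))). field; lra.
    + unfold Lf, hi, lo, Rmax, Rmin. dest_all; lra.
  - intros z Hz. unfold lo, Rmax in Hz. unfold unif_density. dest_all; lra.
  - intros z Hz. unfold hi, Rmin in Hz. unfold unif_density. dest_all; lra.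
  - intros z Hz. unfold lo, hi, Rmax, Rmin in Hz. unfold unif_density. dest_all; lra.
Qed.

Lemma RInt_scalR (f : R -> R) k a b : ex_RInt f a b -> RInt (fun y => k * f y) a b = k * RInt f a b.
Proof. intros H. exact (RInt_scal f a b k H). Qed.

Lemma contR_scal k (f : R -> R) x : continuous f x -> continuous (fun y => k * f y) x.
Proof.
  intros H. apply continuity_pt_filterlim. apply continuity_pt_filterlim in H.
  assert (H2 := continuity_pt_scal f k x H). unfold mult_real_fct in H2. exact H2.
Qed.

Lemma exR (f : R -> R) a b : (forall x, continuous f x) -> ex_RInt f a b.
Proof. intros H. apply (@ex_RInt_continuous R_CompleteNormedModule). intros; apply H. Qed.

Lemma Lf_ex a2 a3 a b : ex_RInt (Lf a2 a3) a b.
Proof. apply exR. apply Lf_cont. Qed.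

Lemma lin_cont a2 a3 w y : continuous (fun z => Lf a2 a3 (w - z)) y.
Proof.
  apply lip_cont. intros u v. eapply Rle_trans; [apply Lf_lip|].
  replace (w - u - (w - v)) with (- (u - v)) by ring. rewrite Rabs_Ropp. lra.
Qed.

Lemma change_var a2 a3 w c1 a1 :
  RInt (fun y => Lf a2 a3 (w - y)) c1 (c1+a1) = RInt (Lf a2 a3) (w-c1-a1) (w-c1).
Proof.
  assert (E := RInt_comp_lin (Lf a2 a3) (-1) w c1 (c1+a1) (Lf_ex _ _ _ _)).
  rewrite (RInt_ext _ (fun y => -1 * Lf a2 a3 (w - y))) in E.
  2:{ intros y _. rscal. replace (-1 * y + w) with (w - y) by ring. reflexivity. }
  rewrite RInt_scalR in E. 2:{ apply exR. apply lin_cont. }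
  replace (-1*c1+w) with (w-c1) in E by ring.
  replace (-1*(c1+a1)+w) with (w-c1-a1) in E by ring.
  rewrite <- (opp_RInt_swap (Lf a2 a3) (w-c1-a1) (w-c1)) in E by apply Lf_ex.
  rewrite oppR in E. lra.
Qed.

Lemma p_val a1 a2 a3 c1 c2 c3 q p x : 0 < a1 -> 0 < a2 -> 0 < a3 ->
  (forall y, q y = Lf a2 a3 (y - c2 - c3) / (a2 * a3)) ->
  is_convolution (unif_density c1 a1) q p ->
  p x = RInt (Lf a2 a3) (x - (c1+c2+c3) - a1) (x - (c1+c2+c3)) / (a1 * a2 * a3).
Proof.
  intros Ha1 Ha2 Ha3 Hq Hc.
  set (K := Rabs c1 + Rabs (c1 + a1) + 1).
  apply (uniq_lim _ _ _ K (Hc x)).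
  intros u v Hu Hv.
  assert (A1 := Rle_abs c1). assert (A2 := Rle_abs (c1+a1)). assert (A3 := Rle_abs (-c1)).
  assert (A4 := Rle_abs (-(c1+a1))). rewrite Rabs_Ropp in A3, A4.
  destruct (window (fun y => unif_density c1 a1 y * q (x - y))
             (fun y => / (a1*a2*a3) * Lf a2 a3 (x - (c2+c3) - y)) c1 (c1+a1) u v) as [_ ->].
  - unfold K in *; lra.
  - lra.
  - unfold K in *; lra.
  - intros z Hz. unfold unif_density. dest_all; lra.
  - intros z Hz. unfold unif_density. dest_all; lra.
  - intros z Hz. unfold unif_density. dest_all; try lra. rewrite Hq.
    replace (x - z - c2 - c3) with (x - (c2+c3) - z) by ring. field; lra.
  - apply exR. intros; apply contR_scal, lin_cont.
  - rewrite RInt_scalR. 2:{ apply exR. apply lin_cont. }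
    rewrite change_var.
    replace (x - (c2 + c3) - c1 - a1) with (x - (c1+c2+c3) - a1) by ring.
    replace (x - (c2 + c3) - c1) with (x - (c1+c2+c3)) by ring.
    toR. unfold Rdiv. ring.
Qed.

Section Lam.
Variables a1 a2 a3 : R.
Hypothesis Ha1 : 0 < a1.
Hypothesis Ha2 : 0 < a2.
Hypothesis Ha3 : 0 < a3.

Definition Lam s := RInt (Lf a2 a3) (s - a1) s.
Definition lam s := Lf a2 a3 s - Lf a2 a3 (s - a1).
Definition mm := Rmin a1 (Rmin a2 a3).

Lemma mm_prop : 0 < mm /\ mm <= a1 /\ mm <= a2 /\ mm <= a3.
Proof. unfold mm, Rmin. dest_all; lra. Qed.

Lemma Lam_nonneg s : 0 <= Lam s.
Proof. unfold Lam. apply (RInt_ge_0 (Lf a2 a3) (s - a1) s). lra. apply Lf_ex. intros; apply Lf_nonneg. Qed.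

Lemma Lam_key s : lam s ^ 2 <= 2 * Lam s.
Proof.
  unfold lam, Lam. apply (keyineq (Lf a2 a3) (Lf_cont a2 a3) (Lf_nonneg a2 a3) (Lf_lip a2 a3)). lra.
Qed.

Lemma Lam_deriv s : is_derive Lam s (lam s).
Proof.
  assert (D1 : forall b, is_derive (fun b => RInt (Lf a2 a3) 0 b) b (Lf a2 a3 b)).
  { intros b. apply (is_derive_RInt (Lf a2 a3) (fun b => RInt (Lf a2 a3) 0 b) 0 b). apply filter_forall. intros; apply (@RInt_correct R_CompleteNormedModule), Lf_ex.
    apply Lf_cont. }
  assert (D2 : is_derive (fun s => s - a1) s 1).
  { auto_derive; auto. }
  assert (D3 := is_derive_comp (fun b => RInt (Lf a2 a3) 0 b) (fun s => s - a1) s _ _ (D1 (s - a1)) D2).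
  assert (D4 := is_derive_minus _ _ s _ _ (D1 s) D3).
  eapply is_derive_ext; [|].
  2:{ replace (lam s) with (minus (Lf a2 a3 s) (scal 1 (Lf a2 a3 (s - a1)))). exact D4.
      rscal. rewrite minusR. unfold lam. toR. ring. }
  intros t. simpl. rewrite minusR. unfold Lam.
  rewrite <- (RInt_Chasles (Lf a2 a3) 0 (t - a1) t) by apply Lf_ex.
  rewrite plusR. toR. ring.
Qed.

Lemma Lam_zl s : s <= 0 -> Lam s = 0.
Proof.
  intros H. unfold Lam. refine (proj2 (zero_int _ _ _ _)). intros x Hx. apply Lf_zl; auto.
  rewrite Rmax_right in Hx by lra. lra.
Qed.

Lemma Lam_zr s : a1 + a2 + a3 <= s -> Lam s = 0.
Proof.
  intros H. unfold Lam. refine (proj2 (zero_int _ _ _ _)). intros x Hx. apply Lf_zr; auto.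
  rewrite Rmin_left in Hx by lra. lra.
Qed.

Lemma Lam_left s : 0 < s <= mm -> Lam s = s^2/2 /\ lam s = s.
Proof.
  intros H. destruct mm_prop as (M0 & M1 & M2 & M3). split.
  - unfold Lam. rewrite <- (RInt_Chasles (Lf a2 a3) (s - a1) 0 s) by apply Lf_ex.
    rewrite plusR.
    assert (Z : RInt (Lf a2 a3) (s - a1) 0 = 0).
    { refine (proj2 (zero_int _ _ _ _)). intros x Hx. rewrite Rmax_right in Hx by lra. apply Lf_zl; auto; lra. }
    rewrite Z.
    rewrite (RInt_ext _ (fun z => 1 * (z - 0))).
    2:{ intros x Hx. rewrite Rmin_left, Rmax_right in Hx by lra. rewrite Lf_id; lra. }
    rewrite RInt_lin. toR. field.
  - unfold lam. rewrite Lf_id by lra. rewrite Lf_zl by lra. ring.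
Qed.

Lemma Lam_right s : a1 + a2 + a3 - mm <= s < a1 + a2 + a3 ->
  Lam s = (a1 + a2 + a3 - s)^2/2 /\ lam s = - (a1 + a2 + a3 - s).
Proof.
  intros H. destruct mm_prop as (M0 & M1 & M2 & M3). split.
  - unfold Lam. rewrite <- (RInt_Chasles (Lf a2 a3) (s - a1) (a2 + a3) s) by apply Lf_ex.
    rewrite plusR.
    assert (Z : RInt (Lf a2 a3) (a2 + a3) s = 0).
    { refine (proj2 (zero_int _ _ _ _)). intros x Hx. rewrite Rmin_left in Hx by lra. apply Lf_zr; auto; lra. }
    rewrite Z.
    rewrite (RInt_ext _ (fun z => -1 * (z - (a2 + a3)))).
    2:{ intros x Hx. rewrite Rmin_left, Rmax_right in Hx by lra. rewrite Lf_rt; lra. }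
    rewrite RInt_lin. toR. field.
  - unfold lam. rewrite Lf_zr by lra. rewrite Lf_rt by lra. ring.
Qed.

Lemma Lam_pos s : mm <= s <= a1 + a2 + a3 - mm -> 0 < Lam s.
Proof.
  intros H. destruct mm_prop as (M0 & M1 & M2 & M3).
  assert (fc := Lf_cont a2 a3). assert (fp := Lf_nonneg a2 a3). assert (fl := Lf_lip a2 a3).
  set (h := (a2 + a3) / 2).
  unfold Lam.
  destruct (Rle_dec s h).
  - assert (P : 0 < Lf a2 a3 s) by (apply Lf_pos; auto; unfold h in *; lra).
    set (e := Rmin (Lf a2 a3 s) a1).
    assert (E : 0 < e /\ e <= Lf a2 a3 s /\ e <= a1) by (unfold e, Rmin; dest_all; lra).
    assert (X := lowL _ fc fp fl (s - a1) s s e). nra.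
  - destruct (Rle_dec h (s - a1)).
    + assert (P : 0 < Lf a2 a3 (s - a1)) by (apply Lf_pos; auto; unfold h in *; lra).
      set (e := Rmin (Lf a2 a3 (s - a1)) a1).
      assert (E : 0 < e /\ e <= Lf a2 a3 (s - a1) /\ e <= a1) by (unfold e, Rmin; dest_all; lra).
      assert (X := lowR _ fc fp fl (s - a1) s (s - a1) e). nra.
    + assert (P : 0 < Lf a2 a3 h) by (apply Lf_pos; auto; unfold h in *; lra).
      set (e := Rmin (Lf a2 a3 h) (h - (s - a1))).
      assert (E : 0 < e /\ e <= Lf a2 a3 h /\ e <= h - (s - a1)) by (unfold e, Rmin; dest_all; lra).
      assert (X := lowL _ fc fp fl (s - a1) s h e). nra.
Qed.

End Lam.

Lemma cRmult (f g : R -> R) x : continuous f x -> continuous g x -> continuous (fun y => f y * g y) x.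
Proof. intros; exact (continuous_mult f g x H H0). Qed.
Lemma cRminus (f g : R -> R) x : continuous f x -> continuous g x -> continuous (fun y => f y - g y) x.
Proof. intros; exact (continuous_minus f g x H H0). Qed.
Lemma cRshift (k : R) x : continuous (fun y => y - k) x.
Proof. apply lip_cont. intros. replace (x0 - k - (y - k)) with (x0 - y) by ring. lra. Qed.

Lemma ex_sub (F : R -> R) U W u v : U <= u -> u <= v -> v <= W -> ex_RInt F U W -> ex_RInt F u v.
Proof.
  intros H1 H2 H3 E.
  apply (@ex_RInt_Chasles_2 R_CompleteNormedModule) with U. lra. apply (@ex_RInt_Chasles_1 R_CompleteNormedModule) with W. lra. exact E.
Qed.

Lemma RInt_sub (F : R -> R) U W u v : U <= u -> u <= v -> v <= W -> ex_RInt F U W ->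
  (forall x, 0 <= F x) -> RInt F u v <= RInt F U W.
Proof.
  intros H1 H2 H3 E P.
  rewrite <- (RInt_Chasles F U u W) by (apply (ex_sub F U W); auto; lra).
  rewrite <- (RInt_Chasles F u v W) by (apply (ex_sub F U W); auto; lra).
  rplus.
  assert (0 <= RInt F U u) by (apply RInt_ge_0; auto; apply (ex_sub F U W); auto; lra).
  assert (0 <= RInt F v W) by (apply RInt_ge_0; auto; apply (ex_sub F U W); auto; lra).
  lra.
Qed.

Theorem lemma4p2 (a1 a2 a3 c1 c2 c3 : R) (q p : R -> R) :
  0 < a1 -> 0 < a2 -> 0 < a3 ->
  is_convolution (unif_density c2 a2) (unif_density c3 a3) q ->
  is_convolution (unif_density c1 a1) q p ->
  fisher_info_le p (2 * (/ (a1 * a2) + / (a1 * a3) + / (a2 * a3))).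
Proof.
  intros Ha1 Ha2 Ha3 Hq Hp.
  assert (HQ : forall y, q y = Lf a2 a3 (y - c2 - c3) / (a2 * a3)) by (intros; apply q_val; auto).
  set (D := c1 + c2 + c3). set (V := a1 * a2 * a3). set (A := a1 + a2 + a3).
  assert (HV : 0 < V) by (unfold V; apply Rmult_lt_0_compat; [apply Rmult_lt_0_compat|]; lra).
  assert (HP : forall x, p x = Lam a1 a2 a3 (x - D) / V).
  { intros x. rewrite (p_val a1 a2 a3 c1 c2 c3 q p x); auto. }
  destruct (mm_prop a1 a2 a3 Ha1 Ha2 Ha3) as (M0 & M1 & M2 & M3).
  set (m := mm a1 a2 a3) in *.
  set (pd := fun x => lam a1 a2 a3 (x - D) / V).
  exists pd. split.
  { intros x. apply is_derive_Reals.
    apply is_derive_ext with (fun x => / V * Lam a1 a2 a3 (x - D)).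
    { intros t. rewrite HP. unfold Rdiv. toR. ring. }
    replace (pd x) with (/ V * scal 1 (lam a1 a2 a3 (x - D))).
    2:{ unfold pd. rscal. unfold Rdiv. toR. ring. }
    apply is_derive_scal.
    apply (is_derive_comp (Lam a1 a2 a3) (fun x => x - D)).
    - apply Lam_deriv; auto.
    - auto_derive; auto. }
  set (F := fisher_integrand p pd).
  assert (Fv : forall x, F x = if Rlt_dec 0 (Lam a1 a2 a3 (x - D) / V)
                  then (lam a1 a2 a3 (x - D) / V) ^ 2 / (Lam a1 a2 a3 (x - D) / V) else 0).
  { intros x. unfold F, fisher_integrand, pd. rewrite HP. reflexivity. }
  assert (F0 : forall x, 0 <= F x).
  { intros x. rewrite Fv. destruct Rlt_dec; [|lra].
    apply Rmult_le_pos. apply pow2_ge_0. left; apply Rinv_0_lt_compat; auto. }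
  assert (F1 : forall x, F x <= 2 / V).
  { intros x. rewrite Fv. assert (K : lam a1 a2 a3 (x - D) ^ 2 <= 2 * Lam a1 a2 a3 (x - D)) by (apply Lam_key; auto).
    destruct Rlt_dec as [Hl|]; [|apply Rlt_le, Rdiv_lt_0_compat; lra].
    assert (HL : 0 < Lam a1 a2 a3 (x - D)).
    { apply Rmult_lt_reg_r with (/ V). apply Rinv_0_lt_compat; auto. rewrite Rmult_0_l. exact Hl. }
    replace ((lam a1 a2 a3 (x - D) / V) ^ 2 / (Lam a1 a2 a3 (x - D) / V)) with
      (lam a1 a2 a3 (x - D) ^ 2 / Lam a1 a2 a3 (x - D) * / V) by (field; lra).
    unfold Rdiv at 2. apply Rmult_le_compat_r. left; apply Rinv_0_lt_compat; auto.
    apply Rmult_le_reg_r with (Lam a1 a2 a3 (x - D)); auto.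
    unfold Rdiv. rewrite Rmult_assoc, Rinv_l by lra. lra. }
  assert (Fz : forall x, x <= D \/ D + A <= x -> F x = 0).
  { intros x Hx. rewrite Fv. destruct Rlt_dec as [Hl|]; auto.
    exfalso. destruct Hx.
    - assert (Z : Lam a1 a2 a3 (x - D) = 0) by (apply Lam_zl; auto; lra). rewrite Z in Hl. unfold Rdiv in Hl. rewrite Rmult_0_l in Hl. lra.
    - assert (Z : Lam a1 a2 a3 (x - D) = 0) by (apply Lam_zr; auto; unfold A in *; lra). rewrite Z in Hl. unfold Rdiv in Hl. rewrite Rmult_0_l in Hl. lra. }
  assert (Fl : forall x, D < x <= D + m -> F x = 2 / V).
  { intros x Hx. rewrite Fv. destruct (Lam_left a1 a2 a3 Ha1 Ha2 Ha3 (x - D)) as [E1 E2]; [unfold m in *; lra|].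
    rewrite E1, E2. destruct Rlt_dec as [Hl|Hl].
    - field. split; lra.
    - exfalso; apply Hl. apply Rdiv_lt_0_compat; auto. apply Rdiv_lt_0_compat; try lra.
      apply pow_lt; lra. }
  assert (Fr : forall x, D + A - m <= x < D + A -> F x = 2 / V).
  { intros x Hx. rewrite Fv.
    destruct (Lam_right a1 a2 a3 Ha1 Ha2 Ha3 (x - D)) as [E1 E2]; [unfold m, A in *; lra|].
    rewrite E1, E2. destruct Rlt_dec as [Hl|Hl].
    - field. split; unfold A in *; lra.
    - exfalso; apply Hl. apply Rdiv_lt_0_compat; auto. apply Rdiv_lt_0_compat; try lra.
      apply pow_lt; unfold A in *; lra. }
  set (G := fun x => (lam a1 a2 a3 (x - D) / V) * (lam a1 a2 a3 (x - D) / V) *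
                     / (Lam a1 a2 a3 (x - D) / V)).
  assert (Fm : forall x, D + m <= x <= D + A - m -> F x = G x /\ continuous G x).
  { intros x Hx.
    assert (HL : 0 < Lam a1 a2 a3 (x - D)) by (apply Lam_pos; auto; unfold m, A in *; lra).
    split.
    - rewrite Fv. destruct Rlt_dec as [Hl|Hl].
      + unfold G. unfold Rdiv. ring.
      + exfalso; apply Hl. apply Rdiv_lt_0_compat; auto.
    - assert (CL : forall y, continuous (fun y => Lam a1 a2 a3 (y - D) / V) y).
      { intros y. apply cRmult; [|apply continuous_const].
        apply (continuous_comp (fun y => y - D) (Lam a1 a2 a3)). apply cRshift.
        apply (@ex_derive_continuous R_AbsRing R_NormedModule). eexists. apply Lam_deriv; auto. }
      assert (Cl : forall y, continuous (fun y => lam a1 a2 a3 (y - D) / V) y).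
      { intros y. apply cRmult; [|apply continuous_const]. unfold lam.
        apply cRminus.
        - apply (continuous_comp (fun y => y - D) (Lf a2 a3)). apply cRshift. apply Lf_cont.
        - apply (continuous_comp (fun y => y - D) (fun s => Lf a2 a3 (s - a1))). apply cRshift.
          apply (continuous_comp (fun y => y - a1) (Lf a2 a3)). apply cRshift. apply Lf_cont. }
      unfold G. apply cRmult. apply cRmult; apply Cl.
      apply continuous_Rinv_comp. apply CL. apply Rgt_not_eq. apply Rdiv_lt_0_compat; auto. }
  assert (EX : ex_RInt F D (D + A)).
  { apply ex_RInt_Chasles with (D + m).
    { apply ex_RInt_ext with (fun _ => 2 / V). intros x Hx.
      rewrite Rmin_left, Rmax_right in Hx by lra. symmetry; apply Fl; lra. apply ex_RInt_const. }
    apply ex_RInt_Chasles with (D + A - m).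
    { apply ex_RInt_ext with G. intros x Hx.
      rewrite Rmin_left, Rmax_right in Hx by (unfold A in *; lra). symmetry; apply Fm; lra.
      apply (@ex_RInt_continuous R_CompleteNormedModule). intros z Hz.
      rewrite Rmin_left, Rmax_right in Hz by (unfold A in *; lra). apply Fm; lra. }
    apply ex_RInt_ext with (fun _ => 2 / V). intros x Hx.
    rewrite Rmin_left, Rmax_right in Hx by (unfold A in *; lra). symmetry; apply Fr; lra.
    apply ex_RInt_const. }
  intros u v Huv.
  set (U := Rmin u D). set (W := Rmax v (D + A)).
  assert (HU1 : U <= u) by apply Rmin_l. assert (HU2 : U <= D) by apply Rmin_r.
  assert (HW1 : v <= W) by apply Rmax_l. assert (HW2 : D + A <= W) by apply Rmax_r.
  assert (Z1 : ex_RInt F U D /\ RInt F U D = 0).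
  { apply zero_int. intros x Hx. apply Fz. left. rewrite Rmax_right in Hx by lra. lra. }
  assert (Z2 : ex_RInt F (D+A) W /\ RInt F (D+A) W = 0).
  { apply zero_int. intros x Hx. apply Fz. right. rewrite Rmin_left in Hx; lra. }
  destruct Z1 as [E1 R1], Z2 as [E2 R2].
  assert (EDW : ex_RInt F D W) by (apply ex_RInt_Chasles with (D+A); auto).
  assert (EW : ex_RInt F U W) by (apply ex_RInt_Chasles with D; auto).
  assert (Euv : ex_RInt F u v) by (apply (ex_sub F U W); auto).
  exists (ex_RInt_Reals_0 F u v Euv).
  rewrite <- RInt_Reals.
  eapply Rle_trans. apply (RInt_sub F U W u v); auto.
  rewrite <- (RInt_Chasles F U D W) by auto.
  rewrite <- (RInt_Chasles F D (D+A) W) by auto.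
  rplus. rewrite R1, R2.
  assert (B : RInt F D (D+A) <= RInt (fun _ => 2/V) D (D+A)).
  { apply RInt_le; [unfold A in *; lra | exact EX | apply ex_RInt_const | intros; apply F1]. }
  rewrite RInt_const in B. change (scal (D + A - D) (2 / V)) with ((D + A - D) * (2 / V)) in B.
  replace (2 * (/ (a1 * a2) + / (a1 * a3) + / (a2 * a3))) with ((D + A - D) * (2 / V)).
  lra.
  unfold A, V. field. repeat split; lra.
Qed.
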